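(* Let $M$ be a monoid of binary relations on a finite set $Q$, let $e\in M$ be an idempotent, and let $\Gamma$ be the set of strongly connected components of the restriction of $e$ to its set of fixed points. For $m\in H(e)$ define the relation $\gamma_e(m)$ on $\Gamma$ by $\gamma_e(m)=\{(\rho,\sigma)\in\Gamma\times\Gamma\mid (r,s)\in m\text{ and }(s,r)\in m^{-1}\text{ for some }r\in\rho,\ s\in\sigma\}$. Then each $\gamma_e(m)$ is a permutation of $\Gamma$, and $m\mapsto\gamma_e(m)$ is an isomorphism from the group $H(e)$ onto a group of permutations of $\Gamma$.
   Context: A monoid of relations on $Q$ is a set of binary relations on $Q$ containing the identity relation and closed under composition $mn=\{(p,q)\mid\exists r,(p,r)\in m,(r,q)\in n\}$. A fixed point of $e$ is $q$ with $(q,q)\in e$. $H(e)$ denotes the $\mathcal H$-class of $e$ in $M$ (Green's relation $\mathcal H=\mathcal R\cap\mathcal L$); since it contains the idempotent $e$ it is a group with identity $e$, and $m^{-1}$ denotes the inverse of $m$ in this group. *)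

(* Defs.v *)
From mathcomp Require Import all_boot.
Set Implicit Arguments. Unset Strict Implicit. Unset Printing Implicit Defensive.

Section Defs.
Variable T : finType.

Definition rcomp (m n : {set T * T}) : {set T * T} :=
  [set pq | [exists r, ((pq.1, r) \in m) && ((r, pq.2) \in n)]].

Definition idrel : {set T * T} := [set pq | pq.1 == pq.2].

Definition is_rel_monoid (M : {set {set T * T}}) : Prop :=
  idrel \in M /\ (forall m n, m \in M -> n \in M -> rcomp m n \in M).

(* Green's relations (M contains the identity, so M^1 = M) *)
Definition greenR (M : {set {set T * T}}) (a b : {set T * T}) : bool :=
  [exists x in M, a == rcomp b x] && [exists y in M, b == rcomp a y].
Definition greenL (M : {set {set T * T}}) (a b : {set T * T}) : bool :=
  [exists x in M, a == rcomp x b] && [exists y in M, b == rcomp y a].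

Definition Hclass (M : {set {set T * T}}) (e : {set T * T}) : {set {set T * T}} :=
  [set m in M | greenR M m e && greenL M m e].

Definition Hinv (M : {set {set T * T}}) (e m : {set T * T}) : {set T * T} :=
  odflt e [pick m' in Hclass M e | (rcomp m m' == e) && (rcomp m' m == e)].

Definition fixpts (e : {set T * T}) : {set T} := [set q | (q, q) \in e].

Definition restr (e : {set T * T}) : rel T :=
  fun p q => [&& p \in fixpts e, q \in fixpts e & (p, q) \in e].

Definition scc (e : {set T * T}) (q : T) : {set T} :=
  [set q' | connect (restr e) q q' && connect (restr e) q' q].

Definition Gamma (e : {set T * T}) : {set {set T}} :=
  [set scc e q | q in fixpts e].

Definition gammae (M : {set {set T * T}}) (e m : {set T * T})
  : {set {set T} * {set T}} :=
  [set rs in setX (Gamma e) (Gamma e) |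
     [exists r in rs.1, exists s in rs.2,
        ((r, s) \in m) && ((s, r) \in Hinv M e m)]].

End Defs.

Definition is_perm_rel (A : finType) (G : {set A}) (g : {set A * A}) : Prop :=
  g \subset setX G G /\
  (forall a, a \in G -> exists! b, (a, b) \in g) /\
  (forall b, b \in G -> exists! a, (a, b) \in g).

(* Main.v *)
Require Import Defs.
From mathcomp Require Import all_boot.
Set Implicit Arguments. Unset Strict Implicit. Unset Printing Implicit Defensive.

Section Aux.
Variable Q : finType.
Implicit Types (a b c : {set Q * Q}).

Lemma rcompP a b p q :
  reflect (exists r, (p,r) \in a /\ (r,q) \in b) ((p,q) \in rcomp a b).
Proof.
rewrite /rcomp inE /=; apply: (iffP existsP).
- by move=> [r /andP[h1 h2]]; exists r.
- by move=> [r [h1 h2]]; exists r; rewrite h1 h2.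
Qed.

Lemma rcompA a b c : rcomp (rcomp a b) c = rcomp a (rcomp b c).
Proof.
apply/setP => -[p q]; apply/rcompP/rcompP.
- move=> [r [/rcompP[s [h1 h2]] h3]]; exists s; split=> //; apply/rcompP; by exists r.
- move=> [s [h1 /rcompP[r [h2 h3]]]]; exists r; split=> //; apply/rcompP; by exists s.
Qed.

Lemma compin a b x y z : (x,y) \in a -> (y,z) \in b -> (x,z) \in rcomp a b.
Proof. by move=> h1 h2; apply/rcompP; exists y. Qed.

End Aux.

Section Main.
Variable Q : finType.
Implicit Types (a b c : {set Q * Q}).
Variable M : {set {set Q * Q}}.
Variable e : {set Q * Q}.
Hypothesis HM : is_rel_monoid M.
Hypothesis eM : e \in M.
Hypothesis ee : rcomp e e = e.

Lemma etr x y z : (x,y) \in e -> (y,z) \in e -> (x,z) \in e.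
Proof. by move=> h1 h2; rewrite -ee; apply: compin h1 h2. Qed.

Lemma Mcomp a b : a \in M -> b \in M -> rcomp a b \in M.
Proof. by case: HM => _; apply. Qed.

Lemma HclassE m : m \in Hclass M e ->
  [/\ m \in M, exists2 x, x \in M & m = rcomp e x, exists2 y, y \in M & e = rcomp m y,
      exists2 x, x \in M & m = rcomp x e & exists2 y, y \in M & e = rcomp y m].
Proof.
rewrite inE => /andP[mM /andP[/andP[/existsP[x /andP[xM /eqP h1]] /existsP[y /andP[yM /eqP h2]]]
   /andP[/existsP[x' /andP[xM' /eqP h3]] /existsP[y' /andP[yM' /eqP h4]]]]].
split=> //; by [exists x | exists y | exists x' | exists y'].
Qed.

Lemma H_l m : m \in Hclass M e -> rcomp e m = m.
Proof. by case/HclassE=> _ [x _ ->] _ _ _; rewrite -rcompA ee. Qed.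

Lemma H_r m : m \in Hclass M e -> rcomp m e = m.
Proof. by case/HclassE=> _ _ _ [x _ ->] _; rewrite rcompA ee. Qed.

Lemma H_inv m : m \in Hclass M e ->
  exists2 m', m' \in Hclass M e & rcomp m m' = e /\ rcomp m' m = e.
Proof.
move=> Hm; have ml := H_l Hm; have mr := H_r Hm.
case/HclassE: Hm => mM _ [y yM ey] _ [y' yM' ey'].
have ab : rcomp y' e = rcomp e y by rewrite {1}ey -rcompA -ey'.
have h1 : rcomp m (rcomp e y) = e by rewrite -rcompA mr.
have h2 : rcomp (rcomp e y) m = e by rewrite -ab rcompA ml.
exists (rcomp e y) => //.
rewrite inE Mcomp //=; apply/andP; split; apply/andP; split; apply/existsP.
- by exists y; rewrite yM eqxx.
- by exists m; rewrite mM h2 eqxx.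
- by exists y'; rewrite yM' ab eqxx.
- by exists m; rewrite mM h1 eqxx.
Qed.

Lemma HinvP m : m \in Hclass M e ->
  [/\ Hinv M e m \in Hclass M e, rcomp m (Hinv M e m) = e & rcomp (Hinv M e m) m = e].
Proof.
move=> Hm; rewrite /Hinv; case: pickP => [x /andP[Hx /andP[/eqP h1 /eqP h2]]|none] //=.
case: (H_inv Hm) => m' Hm' [h1 h2].
by move: (none m'); rewrite Hm' h1 h2 eqxx.
Qed.

Lemma inv_uniq m z : m \in Hclass M e -> z \in Hclass M e -> rcomp z m = e ->
  z = Hinv M e m.
Proof.
move=> Hm Hz h; case: (HinvP Hm) => Hi h1 h2.
have -> : z = rcomp z (rcomp m (Hinv M e m)) by rewrite h1 H_r.
by rewrite -rcompA h H_l.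
Qed.

Lemma H_mul m n : m \in Hclass M e -> n \in Hclass M e -> rcomp m n \in Hclass M e.
Proof.
move=> Hm Hn; case: (HinvP Hm) => Him hm1 hm2; case: (HinvP Hn) => Hin hn1 hn2.
have [mM _ _ _ _] := HclassE Hm; have [nM _ _ _ _] := HclassE Hn.
have [imM _ _ _ _] := HclassE Him; have [inM _ _ _ _] := HclassE Hin.
have mnM := Mcomp mM nM; have iM := Mcomp inM imM.
have e1 : rcomp (rcomp m n) (rcomp (Hinv M e n) (Hinv M e m)) = e.
  by rewrite rcompA -(rcompA n) hn1 (H_l Him) hm1.
have e2 : rcomp (rcomp (Hinv M e n) (Hinv M e m)) (rcomp m n) = e.
  by rewrite rcompA -(rcompA (Hinv M e m)) hm2 (H_l Hn) hn2.
rewrite inE mnM /=; apply/andP; split; apply/andP; split; apply/existsP.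
- by exists (rcomp m n); rewrite mnM -rcompA (H_l Hm) eqxx.
- by exists (rcomp (Hinv M e n) (Hinv M e m)); rewrite iM e1 eqxx.
- by exists (rcomp m n); rewrite mnM rcompA (H_r Hn) eqxx.
- by exists (rcomp (Hinv M e n) (Hinv M e m)); rewrite iM e2 eqxx.
Qed.

Lemma Hinv_mul m n : m \in Hclass M e -> n \in Hclass M e ->
  Hinv M e (rcomp m n) = rcomp (Hinv M e n) (Hinv M e m).
Proof.
move=> Hm Hn; case: (HinvP Hm) => Him hm1 hm2; case: (HinvP Hn) => Hin hn1 hn2.
symmetry; apply: inv_uniq; first exact: H_mul.
  exact: H_mul.
by rewrite rcompA -(rcompA (Hinv M e m)) hm2 (H_l Hn) hn2.
Qed.


Lemma connect_restr x y : connect (restr e) x y -> x = y \/ (x,y) \in e.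
Proof.
case/connectP => p; elim: p x => [|z p IH] x /=; first by move=> _ ->; left.
move=> /andP[hr hp] hy; move: hr; rewrite /restr => /and3P[_ _ hxz].
case: (IH z hp hy) => [<-|h]; right => //; exact: etr hxz h.
Qed.

Lemma sccE q x : (q,q) \in e -> (x \in scc e q) = ((q,x) \in e) && ((x,q) \in e).
Proof.
move=> hq; rewrite /scc inE; apply/andP/andP => [[h1 h2]|[h1 h2]].
- case: (connect_restr h1) => [E|a]; first by subst x; split.
  case: (connect_restr h2) => [E|b]; last by split.
  by subst x; split.
- have hx : (x,x) \in e := etr h2 h1.
  split; apply: connect1; by rewrite /restr !inE ?hq ?hx ?h1 ?h2.
Qed.

Lemma scc_fix q x : (q,q) \in e -> x \in scc e q -> (x,x) \in e.
Proof. by move=> hq; rewrite sccE // => /andP[h1 h2]; exact: etr h2 h1. Qed.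

Lemma scc_same q x : (q,q) \in e -> x \in scc e q -> scc e q = scc e x.
Proof.
move=> hq hx; have hxx := scc_fix hq hx; move: hx; rewrite sccE // => /andP[hqx hxq].
apply/setP => y; rewrite sccE // sccE //.
apply/andP/andP => [[a b]|[a b]]; split.
- exact: etr hxq a.
- exact: etr b hqx.
- exact: etr hqx a.
- exact: etr b hxq.
Qed.

Lemma Gamma_mem rho r : rho \in Gamma e -> r \in rho -> rho = scc e r /\ (r,r) \in e.
Proof.
case/imsetP => q; rewrite inE => hq -> hr; split; [exact: scc_same | exact: scc_fix hq hr].
Qed.

Lemma scc_self r : (r,r) \in e -> r \in scc e r.
Proof. by move=> hr; rewrite sccE // hr. Qed.

Lemma scc_Gamma r : (r,r) \in e -> scc e r \in Gamma e.
Proof. by move=> hr; apply/imsetP; exists r; rewrite ?inE. Qed.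

Lemma scc_rel rho (x y : Q) : rho \in Gamma e -> x \in rho -> y \in rho -> (x,y) \in e.
Proof.
move=> G ha; have [E haa] := Gamma_mem G ha; rewrite E sccE // => /andP[]; done.
Qed.

Lemma scc_eq (x y : Q) : (x,x) \in e -> (x,y) \in e -> (y,x) \in e -> scc e x = scc e y.
Proof. by move=> ha h1 h2; apply: scc_same => //; rewrite sccE // h1 h2. Qed.

Lemma gammaP m rho sig : ((rho,sig) \in gammae M e m) <->
  [/\ rho \in Gamma e, sig \in Gamma e &
      exists r s, [/\ r \in rho, s \in sig, (r,s) \in m & (s,r) \in Hinv M e m]].
Proof.
rewrite /gammae in_set in_setX /=; split.
- case/andP => /andP[h1 h2] /existsP[r /andP[hr /existsP[s /andP[hs /andP[a b]]]]].
  by split=> //; exists r, s.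
- case=> h1 h2 [r [s [hr hs a b]]]; rewrite h1 h2 /=; apply/existsP; exists r.
  rewrite hr /=; apply/existsP; exists s; by rewrite hs a b.
Qed.

Lemma factor p (a : Q) : (p,a) \in e -> exists f, [/\ (f,f) \in e, (p,f) \in e & (f,a) \in e].
Proof.
move=> hpa.
pose S := fun y => ((p,y) \in e) && ((y,a) \in e).
pose pre y := [set z | ((p,z) \in e) && ((z,y) \in e)].
have [y0 hy0] : exists y0, S y0.
  by move: hpa; rewrite -{1}ee => /rcompP[y [h1 h2]]; exists y; rewrite /S h1 h2.
case: (@arg_minnP _ _ S (fun y => #|pre y|) hy0) => y /andP[hpy hya] ymin.
move: (hpy); rewrite -{1}ee => /rcompP[z [hpz hzy]].
have Sz : S z by rewrite /S hpz (etr hzy hya).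
have sub : pre z \subset pre y.
  apply/subsetP => w; rewrite !inE => /andP[-> hwz] /=; exact: etr hwz hzy.
have eq : pre z = pre y.
  apply/eqP; rewrite eqEcard sub; exact: ymin.
have : z \in pre z by rewrite eq inE hpz hzy.
rewrite inE => /andP[_ hzz]; exists z; split => //; exact: etr hzy hya.
Qed.


Lemma perm_part m : m \in Hclass M e -> is_perm_rel (Gamma e) (gammae M e m).
Proof.
move=> Hm; case: (HinvP Hm) => Hi h1 h2.
split; last split.
- by apply/subsetP => -[x y] /gammaP[hx hy _]; rewrite in_setX hx hy.
- move=> rho; case/imsetP => q; rewrite inE => hq ->.
  move: (hq); rewrite -{1}h1 => /rcompP[s [hqs hsq]].
  have hs : (s,s) \in e by rewrite -h2; exact: compin hsq hqs.
  exists (scc e s); split.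
  + apply/gammaP; split; [exact: scc_Gamma | exact: scc_Gamma |].
    by exists q, s; split => //; exact: scc_self.
  + move=> sig /gammaP[_ hsig [r [s2 [hr hs2 a b]]]].
    have qr : (q,r) \in e by apply: (scc_rel (scc_Gamma hq)) => //; exact: scc_self.
    have rq : (r,q) \in e by apply: (scc_rel (scc_Gamma hq)) => //; exact: scc_self.
    have ss2 : (s,s2) \in e.
      rewrite -h2; apply: compin _ a; rewrite -(H_r Hi); exact: compin hsq qr.
    have s2s : (s2,s) \in e.
      rewrite -h2; apply: compin _ hqs; rewrite -(H_r Hi); exact: compin b rq.
    rewrite (proj1 (Gamma_mem hsig hs2)); exact: scc_eq.
- move=> sig; case/imsetP => q; rewrite inE => hq ->.
  move: (hq); rewrite -{1}h2 => /rcompP[r [hqr hrq]].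
  have hr : (r,r) \in e by rewrite -h1; exact: compin hrq hqr.
  exists (scc e r); split.
  + apply/gammaP; split; [exact: scc_Gamma | exact: scc_Gamma |].
    by exists r, q; split => //; exact: scc_self.
  + move=> rho /gammaP[hrho _ [r2 [s2 [hr2 hs2 a b]]]].
    have qs : (q,s2) \in e by apply: (scc_rel (scc_Gamma hq)) => //; exact: scc_self.
    have sq : (s2,q) \in e by apply: (scc_rel (scc_Gamma hq)) => //; exact: scc_self.
    have rr2 : (r,r2) \in e.
      rewrite -h1; apply: compin _ b; rewrite -(H_r Hm); exact: compin hrq qs.
    have r2r : (r2,r) \in e.
      rewrite -h1; apply: compin _ hqr; rewrite -(H_r Hm); exact: compin a sq.
    rewrite (proj1 (Gamma_mem hrho hr2)); exact: scc_eq.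
Qed.

Lemma hom_part m n : m \in Hclass M e -> n \in Hclass M e ->
  gammae M e (rcomp m n) = rcomp (gammae M e m) (gammae M e n).
Proof.
move=> Hm Hn; case: (HinvP Hm) => Him hm1 hm2; case: (HinvP Hn) => Hin hn1 hn2.
apply/setP => -[rho tau]; apply/idP/idP.
- move/gammaP => [hrho htau [r [t [hr ht a b]]]].
  rewrite (Hinv_mul Hm Hn) in b.
  case/rcompP: a => s1 [a1 a2]; case/rcompP: b => s2 [b1 b2].
  have e12 : (s1,s2) \in e by rewrite -hn1; exact: compin a2 b1.
  have e21 : (s2,s1) \in e by rewrite -hm2; exact: compin b2 a1.
  have hs1 : (s1,s1) \in e := etr e12 e21.
  apply/rcompP; exists (scc e s1); split; apply/gammaP.
  + split => //; first exact: scc_Gamma.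
    exists r, s1; split => //; first exact: scc_self.
    rewrite -(H_l Him); exact: compin e12 b2.
  + split => //; first exact: scc_Gamma.
    exists s1, t; split => //; first exact: scc_self.
    rewrite -(H_r Hin); exact: compin b1 e21.
- case/rcompP => sig [/gammaP[hrho hsig [r [s [hr hs a b]]]] /gammaP[_ htau [s2 [t [hs2 ht c d]]]]].
  have ss2 := scc_rel hsig hs hs2; have s2s := scc_rel hsig hs2 hs.
  apply/gammaP; split => //; exists r, t; split => //.
  + apply: compin _ c; rewrite -(H_r Hm); exact: compin a ss2.
  + rewrite (Hinv_mul Hm Hn); apply: compin _ b; rewrite -(H_r Hin); exact: compin d s2s.
Qed.

Lemma inj_sub m n : m \in Hclass M e -> n \in Hclass M e ->
  gammae M e m = gammae M e n -> m \subset n.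
Proof.
move=> Hm Hn E; apply/subsetP => -[p q] hpq.
case: (HinvP Hm) => Him hm1 hm2.
have : (p,q) \in rcomp e m by rewrite (H_l Hm).
case/rcompP => a [hpa ham].
case: (factor hpa) => f [hff hpf hfa].
have hfq : (f,q) \in m by rewrite -(H_l Hm); exact: compin hfa ham.
move: (hff); rewrite -{1}hm1 => /rcompP[s [hfs hsf]].
have hs : (s,s) \in e by rewrite -hm2; exact: compin hsf hfs.
have hsq : (s,q) \in e by rewrite -hm2; exact: compin hsf hfq.
have : (scc e f, scc e s) \in gammae M e n.
  rewrite -E; apply/gammaP; split; [exact: scc_Gamma | exact: scc_Gamma |].
  by exists f, s; split => //; exact: scc_self.
case/gammaP => _ _ [r' [s' [hr' hs' a' b']]].
move: hr'; rewrite sccE // => /andP[fr' _].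
move: hs'; rewrite sccE // => /andP[_ s's].
rewrite -(H_r Hn); apply: compin (_ : (p,s') \in n) (etr s's hsq).
rewrite -(H_l Hn); exact: compin (etr hpf fr') a'.
Qed.

End Main.

Theorem mainTheorem7 (Q : finType) (M : {set {set Q * Q}}) (e : {set Q * Q}) :
  is_rel_monoid M -> e \in M -> rcomp e e = e ->
  [/\ (forall m, m \in Hclass M e -> is_perm_rel (Gamma e) (gammae M e m)),
      {in Hclass M e &, forall m n,
         gammae M e (rcomp m n) = rcomp (gammae M e m) (gammae M e n)}
    & {in Hclass M e &, injective (gammae M e)}].
Proof.
move=> HM eM ee; split.
- exact: perm_part.
- move=> m n Hm Hn; exact: hom_part.
- move=> m n Hm Hn E; apply/eqP; rewrite eqEsubset.
  by rewrite (inj_sub HM eM ee Hm Hn E) (inj_sub HM eM ee Hn Hm (esym E)).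
Qed.
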